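(* If $G$ is a $2$-connected graph of order $n$ with minimum degree $\delta(G)\ge n/3$, then $G$ is cummerbund covered.
   Context: All graphs are finite and simple. A cummerbund of a graph is a longest cycle in it. A graph is cummerbund covered if every vertex lies in some cummerbund. *)

(* Defs.v *)
From mathcomp Require Import all_boot.
Set Implicit Arguments.
Unset Strict Implicit.
Unset Printing Implicit Defensive.

Definition simple_graph (T : finType) (e : rel T) : Prop :=
  symmetric e /\ irreflexive e.

Definition is_cycle (T : finType) (e : rel T) (c : seq T) : Prop :=
  [/\ 3 <= size c, uniq c & cycle e c].

Definition cummerbund (T : finType) (e : rel T) (c : seq T) : Prop :=
  is_cycle e c /\ (forall d, is_cycle e d -> size d <= size c).

Definition cummerbund_covered (T : finType) (e : rel T) : Prop :=
  forall v : T, exists c, cummerbund e c /\ v \in c.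

Definition connected_in (T : finType) (e : rel T) (S : {set T}) : Prop :=
  forall x y, x \in S -> y \in S ->
    connect [rel u v | [&& e u v, u \in S & v \in S]] x y.

Definition two_connected (T : finType) (e : rel T) : Prop :=
  [/\ 3 <= #|T|, connected_in e setT &
      forall v : T, connected_in e (setT :\ v)].

Definition degree (T : finType) (e : rel T) (v : T) : nat := #|[set u | e v u]|.

(* Main.v *)
Require Import Defs.
From mathcomp Require Import all_boot.
From mathcomp Require Import zify.
From Stdlib Require Import Classical.

Set Implicit Arguments.
Unset Strict Implicit.
Unset Printing Implicit Defensive.

Lemma ex_max (X : Type) (P : X -> Prop) (f : X -> nat) (N : nat) :
  (exists x, P x) -> (forall x, P x -> f x <= N) ->
  exists x, P x /\ forall y, P y -> f y <= f x.
Proof.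
move=> [x Px] bnd.
suff H : forall k x, P x -> N - f x <= k ->
  exists x, P x /\ forall y, P y -> f y <= f x by exact: (H _ x Px (leqnn _)).
elim=> [|k IH] {Px}x Px Hk.
  exists x; split=> // y Py; have := bnd _ Py; lia.
case: (classic (exists y, P y /\ f x < f y)) => [[y [Py lt]]|no].
  apply: (IH y Py); have := bnd _ Py; lia.
exists x; split=> // y Py; case: (leqP (f y) (f x)) => // lt.
by exfalso; apply: no; exists y.
Qed.

Section Gen.
Variables (T : finType) (e : rel T).
Hypothesis esym : symmetric e.
Hypothesis eirr : irreflexive e.

Lemma split_first (P : pred T) s : has P s ->
  exists s1 x s2, [/\ s = s1 ++ x :: s2, P x & ~~ has P s1].
Proof.
elim: s => [|y s IH] //= /orP[Py|hs].
  by exists [::], y, s.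
case: (boolP (P y)) => Py; first by exists [::], y, s.
have [s1 [x [s2 [-> Px hs1]]]] := IH hs.
by exists (y :: s1), x, s2; rewrite /= (negbTE Py).
Qed.

Lemma split_last (P : pred T) s : has P s ->
  exists s1 x s2, [/\ s = s1 ++ x :: s2, P x & ~~ has P s2].
Proof.
elim: s => [|y s IH] //= hs.
case: (boolP (has P s)) => hs'.
  have [s1 [x [s2 [-> Px hs2]]]] := IH hs'.
  by exists (y :: s1), x, s2.
have Py : P y by move: hs; rewrite (negbTE hs') orbF.
by exists [::], y, s.
Qed.

Lemma sorted_rev_sym s : sorted e (rev s) = sorted e s.
Proof.
rewrite rev_sorted; case: s => //= x s; apply: eq_path => a b; exact: esym.
Qed.

Lemma sorted_join s1 x y s2 : sorted e (rcons s1 x) -> sorted e (y :: s2) ->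
  e x y -> sorted e (rcons s1 x ++ y :: s2).
Proof.
case: s1 => [|z s1] /=; first by move=> _ -> ->.
by move=> p1 p2 exy; rewrite cat_path last_rcons p1 /= exy.
Qed.

Lemma sorted_catl s1 s2 : sorted e (s1 ++ s2) -> sorted e s1.
Proof. by case: s1 => //= x s1; rewrite cat_path => /andP[]. Qed.

Lemma sorted_catr s1 s2 : sorted e (s1 ++ s2) -> sorted e s2.
Proof.
case: s1 => //= x s1; rewrite cat_path => /andP[_].
by case: s2 => //= y s2 /andP[].
Qed.

Lemma bridge_gen (X Y : pred T) (disj : forall z, X z -> ~~ Y z) p :
  forall x W, X x ->
  all (fun z => ~~ X z && ~~ Y z) W -> path e x (W ++ p) ->
  Y (last x (W ++ p)) ->
  exists x' W' y, [/\ X x', Y y, path e x' (rcons W' y),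
     all (fun z => ~~ X z && ~~ Y z) W' &
     subseq (x' :: rcons W' y) (x :: W ++ p)].
Proof.
elim: p => [|z p IH] x W HX HW Hp HY.
  clear Hp; move: HW HY; rewrite cats0; case/lastP: W => [|W z] /=.
    by move=> _ HY; move: (disj _ HX); rewrite HY.
  by rewrite last_rcons all_rcons => /andP[/andP[_ /negP nY] _] /nY.
move: Hp; rewrite cat_path /= => /andP[HpW /andP[ez Hp]].
case Yz: (Y z).
  exists x, W, z; split=> //; first by rewrite rcons_path HpW.
  by rewrite /= eqxx -cats1 subseq_cat2l -[z :: p]cat1s prefix_subseq.
case Xz: (X z).
  have HY' : Y (last z ([::] ++ p)) by move: HY; rewrite last_cat.
  have [x2 [W2 [y2 [H1 H2 H3 H4 H5]]]] := IH z [::] Xz is_true_true Hp HY'.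
  have H6 : subseq (x2 :: rcons W2 y2) (x :: W ++ z :: p).
    apply: (subseq_trans H5); rewrite cat0s.
    have -> : x :: W ++ z :: p = (x :: W) ++ (z :: p) by [].
    exact: suffix_subseq.
  by exists x2, W2, y2; split.
have HW' : all (fun z => ~~ X z && ~~ Y z) (rcons W z) by rewrite all_rcons Xz Yz HW.
have Hp' : path e x (rcons W z ++ p) by rewrite cat_rcons cat_path HpW /= ez Hp.
have HY' : Y (last x (rcons W z ++ p)) by rewrite cat_rcons.
have [x' [W' [y [H1 H2 H3 H4 H5]]]] := IH x (rcons W z) HX HW' Hp' HY'.
by exists x', W', y; split=> //; rewrite -cat_rcons.
Qed.

Lemma bridge (X Y : pred T) (disj : forall z, X z -> ~~ Y z) x p : X x -> path e x p -> Y (last x p) ->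
  exists x' W y, [/\ X x', Y y, path e x' (rcons W y),
     all (fun z => ~~ X z && ~~ Y z) W &
     subseq (x' :: rcons W y) (x :: p)].
Proof. by move=> HX Hp HY; apply: (@bridge_gen X Y disj p x [::]). Qed.

End Gen.

Section Graph.
Variables (T : finType) (e : rel T).
Hypotheses (esym : symmetric e) (eirr : irreflexive e).

Definition restr (S : pred T) : rel T := fun a b => [&& e a b, S a & S b].

Lemma path_restr (S : pred T) x p : path (restr S) x p -> path e x p /\ all S p.
Proof.
elim: p x => [|y p IH] x //= /andP[/and3P[exy _ Sy] /IH[H1 H2]].
by rewrite exy H1 Sy H2.
Qed.

Lemma conn_in_path (S : {set T}) x y : connected_in e S -> x \in S -> y \in S ->
  exists p, [/\ path e x p, last x p = y, uniq (x :: p) & all (mem S) (x :: p)].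
Proof.
move=> cS xS yS; have /connectP[p Hp ->] := cS x y xS yS.
case: (shortenP Hp) => p' Hp' Hu _.
have Hp'' : path (restr (mem S)) x p'.
  by apply: sub_path Hp' => a b.
have [H1 H2] := path_restr Hp''.
by exists p'; split=> //=; rewrite xS H2.
Qed.

Definition hpath (S : {pred T}) p := [/\ sorted e p, uniq p & {subset p <= S}].

Lemma conn_step (S : {set T}) x y : connected_in e S -> x \in S -> y \in S ->
  x != y -> exists z, e x z /\ z \in S.
Proof.
move=> cS xS yS nxy; have [p [Hp Hl _ HS]] := conn_in_path cS xS yS.
case: p Hp Hl HS => [|z p] /=; first by move=> _ Hl; rewrite Hl eqxx in nxy.
by move=> /andP[exz _] _ /and3P[_ zS _]; exists z.
Qed.

Lemma pick_out (A : {set T}) : #|A| < #|T| -> exists w, w \notin A.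
Proof.
move=> lt; case: (pickP (fun w => w \notin A)) => [w Hw|H]; first by exists w.
have : #|T| <= #|A|.
  apply: subset_leq_card; apply/subsetP => w _; move: (H w) => /negbFE.
  by [].
by rewrite leqNgt lt.
Qed.

Hypothesis tc : two_connected e.

Lemma deg2 x : exists y z, [/\ e x y, e x z & y != z].
Proof.
case: tc => n3 cT cTv.
have [w Hw] : exists w, w \notin [set x].
  by apply: pick_out; rewrite cards1; apply: leq_ltn_trans n3.
have nxw : x != w by move: Hw; rewrite in_set1 eq_sym.
have [y [exy _]] := conn_step cT (in_setT x) (in_setT w) nxw.
have [w' Hw'] : exists w, w \notin [set x; y].
  apply: pick_out; rewrite cards2; apply: leq_trans _ n3.
  by case: (x != y).
move: Hw'; rewrite !inE negb_or => /andP[nx ny].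
have xS : x \in setT :\ y.
  by rewrite !inE andbT; apply/eqP => Hxy; move: exy; rewrite Hxy eirr.
have w'S : w' \in setT :\ y by rewrite !inE ny.
have nxw' : x != w' by rewrite eq_sym.
have [z [exz zS]] := conn_step (cTv y) xS w'S nxw'.
exists y, z; split=> //; move: zS; rewrite !inE andbT eq_sym; exact: id.
Qed.

Lemma uniq_size_card (s : seq T) : uniq s -> size s <= #|T|.
Proof. by move=> /card_uniqP <-; exact: max_card. Qed.

Lemma exists_cycle : exists c, is_cycle e c.
Proof.
case: tc => n3 _ _.
have [x0 _] : exists x : T, true.
  case: (pickP (fun _ : T => true)) => [x _|H]; first by exists x.
  by move: n3; rewrite cardE enumT; case: (Finite.enum T) => [|x s] //= _; have := H x.
have [s [[sn [ss su]] smax]] := @ex_max (seq T)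
   (fun s => s != [::] /\ sorted e s /\ uniq s) size #|T|
   (ex_intro _ [:: x0] (conj is_true_true (conj is_true_true is_true_true)))
   (fun s H => uniq_size_card H.2.2).
case: s sn ss su smax => [|x1 s] // _ ss su smax.
set y := last x1 s.
have Ny : forall w, e y w -> w \in x1 :: s.
  move=> w eyw; apply/negPn/negP => wn.
  have P1 : (rcons (x1 :: s) w != [::]) /\ sorted e (rcons (x1 :: s) w) /\ uniq (rcons (x1 :: s) w).
    split; first by case: (s).
    split; first by rewrite /= rcons_path; apply/andP; split.
    by rewrite rcons_uniq wn su.
  by have := smax _ P1; rewrite size_rcons ltnn.
have [y1 [y2 [ey1 ey2 n12]]] := deg2 y.
have hs : has (e y) (x1 :: s) by apply/hasP; exists y1 => //; exact: Ny.
have [s1 [x [s2 [E eyx hs1]]]] := split_first hs.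
have inx : forall w, e y w -> w \in x :: s2.
  move=> w eyw; have := Ny w eyw; rewrite E mem_cat => /orP[ws1|//].
  by move: hs1 => /hasP; case; exists w.
have yl : y = last x s2.
  by rewrite /y -[last x1 s]/(last x1 s) -(last_cons x1 x1 s) E last_cat /=; case: s1 E {hs1}.
exists (x :: s2); split.
- clear E; case: s2 inx yl => [|w [|w' s2]] //= inx yl.
    by move: eyx; rewrite yl eirr.
  have := inx _ ey1; have := inx _ ey2; rewrite !inE.
  have ny1 : y1 != w by apply/eqP => H; move: ey1; rewrite yl H eirr.
  have ny2 : y2 != w by apply/eqP => H; move: ey2; rewrite yl H eirr.
  rewrite (negbTE ny1) (negbTE ny2) !orbF => /eqP H2 /eqP H1.
  by move: n12; rewrite H1 H2 eqxx.
- by move: su; rewrite E cat_uniq => /and3P[_ _].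
- rewrite /cycle rcons_path; have := ss; rewrite E => /sorted_catr /= ->.
  by rewrite -yl eyx.
Qed.

End Graph.

Section Comp.
Variables (T : finType) (e : rel T).
Hypotheses (esym : symmetric e) (eirr : irreflexive e).

Lemma count_lt (P : pred T) s x : x \in s -> ~~ P x -> count P s < size s.
Proof.
move=> xs nPx; rewrite -(count_predC P s).
have : 0 < count (predC P) s by rewrite -has_count; apply/hasP; exists x.
lia.
Qed.

Lemma uniq_cat_rev (s1 s2 : seq T) : uniq (s1 ++ rev s2) = uniq (s1 ++ s2).
Proof.
rewrite !cat_uniq rev_uniq; congr [&& _, _ & _]; congr negb.
by rewrite has_rev.
Qed.

Lemma rev_last_cons (x : T) s : rev (x :: s) = last x s :: rev (belast x s).
Proof. by rewrite lastI rev_rcons. Qed.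

Lemma sorted_consE (x : T) s : sorted e (x :: s) = path e x s.
Proof. by []. Qed.

(* the rotation path: from the head of L to x, covering all neighbours of the
   last vertex *)
Lemma rot_path L x R : sorted e (L ++ x :: R) -> uniq (L ++ x :: R) ->
  has (e (last x R)) L ->
  exists q, [/\ sorted e q, uniq q, {subset q <= L ++ x :: R},
     head x q = head x L & (last x q = x /\
     count (e (last x R)) (L ++ x :: R) < size q)].
Proof.
set y := last x R => Hs Hu hL.
have [L1 [z [L2 [EL eyz hL2]]]] := split_last hL.
exists (rcons L1 z ++ rev (x :: R)).
have Hs' : sorted e (L1 ++ z :: L2 ++ x :: R) by rewrite -cat_cons catA -EL.
have Hu' : uniq (L1 ++ z :: L2 ++ x :: R) by rewrite -cat_cons catA -EL.
split.
- rewrite rev_last_cons -/y; apply: sorted_join.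
  + by move: Hs'; rewrite sorted_cat_cons => /andP[].
  + rewrite -rev_last_cons sorted_rev_sym //.
    by move: Hs'; rewrite -cat_cons catA => /sorted_catr.
  + by rewrite esym.
- rewrite uniq_cat_rev cat_rcons; apply: subseq_uniq Hu'.
  by rewrite subseq_cat2l /= eqxx -[x :: R]cat0s suffix_subseq.
- move=> w; rewrite mem_cat mem_rcons mem_rev EL -catA !mem_cat !inE.
  by case/orP=> [/orP[->|->]|->]; rewrite ?orbT.
- by rewrite EL; case: (L1).
split.
- by rewrite last_cat rev_cons last_rcons.
rewrite EL -catA count_cat /= count_cat.
have -> : count (e y) L2 = 0 by apply/eqP; rewrite eqn0Ngt -has_count.
rewrite size_cat size_rcons size_rev add0n.
have : count (e y) (x :: R) < size (x :: R).
  by apply: (@count_lt _ _ y); [rewrite /y mem_last | rewrite eirr].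
have := count_size (e y) L1; rewrite /= eyz; lia.
Qed.

Lemma rot_path0 L x R : sorted e (L ++ x :: R) -> uniq (L ++ x :: R) ->
  ~~ has (e (last x R)) L ->
  exists q, [/\ sorted e q, uniq q, {subset q <= L ++ x :: R},
     head x q = last x R & (last x q = x /\
     count (e (last x R)) (L ++ x :: R) < size q)].
Proof.
set y := last x R => Hs Hu hL.
exists (rev (x :: R)); split.
- by rewrite sorted_rev_sym //; apply: sorted_catr Hs.
- by rewrite rev_uniq; move: Hu; rewrite cat_uniq => /and3P[].
- by move=> w; rewrite mem_rev mem_cat => ->; rewrite orbT.
- by rewrite rev_last_cons.
split; first by rewrite rev_cons last_rcons.
rewrite count_cat size_rev.
have -> : count (e y) L = 0 by apply/eqP; rewrite eqn0Ngt -has_count.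
by apply: (@count_lt _ _ y); [rewrite /y mem_last | rewrite eirr].
Qed.

Hypothesis tc : two_connected e.
Variables (C : seq T) (v : T).
Hypotheses (vC : v \notin C) (Cu : uniq C) (C3 : 3 <= size C).

Definition notC : pred T := fun z => z \notin C.
Definition comp : {set T} := [set x | connect (restr e notC) v x].

Lemma comp_v : v \in comp.
Proof. by rewrite inE connect0. Qed.

Lemma comp_notC x : x \in comp -> x \notin C.
Proof.
rewrite inE => /connectP[p Hp ->]; have [_] := path_restr Hp.
by case/lastP: p {Hp} => [|p y] //; rewrite last_rcons all_rcons => /andP[].
Qed.

Lemma comp_closed x y : x \in comp -> e x y -> y \notin C -> y \in comp.
Proof.
move=> xc exy ny; have nx := comp_notC xc; move: xc; rewrite !inE => xc.
by apply: connect_trans xc (connect1 _); rewrite /restr exy /notC nx ny.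
Qed.

Lemma path_in_comp x p : x \in comp -> path e x p -> all notC p ->
  {subset p <= comp}.
Proof.
elim: p x => [|y p IH] x //= xc /andP[exy Hp] /andP[ny Hn] w.
have yc : y \in comp by exact: comp_closed xc exy ny.
by rewrite inE => /orP[/eqP->|]; [exact yc| exact: IH yc Hp Hn w].
Qed.

Lemma comp_path x y : x \in comp -> y \in comp ->
  exists p, [/\ path e x p, last x p = y, uniq (x :: p) & {subset x :: p <= comp}].
Proof.
move=> xc yc.
have rs : symmetric (restr e notC).
  by move=> a b; rewrite /restr esym; case: (e b a) => //=; rewrite andbC.
have : connect (restr e notC) x y.
  apply: (@connect_trans _ _ v x y); last by move: yc; rewrite inE.
  by rewrite (sym_connect_sym rs); move: xc; rewrite inE.
move=> /connectP[p Hp ->]; case: (shortenP Hp) => p' Hp' Hu _.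
have [H1 H2] := path_restr Hp'.
exists p'; split => // w; rewrite inE => /orP[/eqP->//|].
exact: path_in_comp xc H1 H2 w.
Qed.

Lemma comp_attach : exists u a, [/\ u \in comp, a \in C & e u a].
Proof.
case: tc => _ cT _.
have c0C : head v C \in C by case: C C3 => [|c C'] //= _; rewrite mem_head.
have [p [Hp Hl _ _]] := conn_in_path cT (in_setT v) (in_setT (head v C)).
have disj : forall z, z \in comp -> z \notin C by move=> z /comp_notC.
have Hl' : last v p \in C by rewrite Hl.
have [x' [W [y [H1 H2 H3 H4 _]]]] := @bridge _ e (mem comp) (mem C) disj v p comp_v Hp Hl'.
case: W H3 H4 => [|w W] /=; first by move=> /andP[exy _] _; exists x', y.
move=> /andP[exw _] /andP[/andP[nw nw'] _].
by move: nw; rewrite (comp_closed H1 exw nw').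
Qed.

End Comp.

Section D0.
Variables (T : finType) (e : rel T).
Hypotheses (esym : symmetric e) (eirr : irreflexive e).
Hypothesis tc : two_connected e.
Variables (C : seq T) (v : T).
Hypotheses (vC : v \notin C) (Cu : uniq C) (C3 : 3 <= size C).

Local Notation H := (comp e C v).

Definition apath a b q := [/\ a \in C, b \in C, a != b, q != [::] &
  [/\ hpath e H q, e a (head a q) & e (last a q) b]].

Lemma sorted_cat_path (x : T) s1 s2 : sorted e (x :: s1) -> path e (last x s1) s2 ->
  sorted e (x :: s1 ++ s2).
Proof. by rewrite /= cat_path => -> ->. Qed.

Lemma hpath_sub (U U' : {pred T}) s : hpath e U s -> {subset U <= U'} -> hpath e U' s.
Proof. by case=> H1 H2 H3 sub; split=> // w /H3 /sub. Qed.

Lemma hpath_rev (U : {pred T}) s : hpath e U s -> hpath e U (rev s).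
Proof.
by case=> H1 H2 H3; split; [rewrite sorted_rev_sym | rewrite rev_uniq | move=> w; rewrite mem_rev; exact: H3].
Qed.

Lemma other_in_C a : exists c, c \in C /\ c != a.
Proof.
case: (boolP (has (fun c => c != a) C)) => [/hasP[c cC nca]|h]; first by exists c.
have : size C <= size [:: a].
  apply: uniq_leq_size => // c cC; rewrite inE.
  by apply/negPn/negP => nca; move/hasP: h; apply; exists c.
by rewrite /=; move: C3; clear; lia.
Qed.

Lemma H_notC x : x \in H -> x \notin C.
Proof. exact: comp_notC. Qed.

Lemma finalL a d (U : {pred T}) : a \in C -> {subset U <= H} ->
  (exists x, x \in U) ->
  (forall x, x \in U -> exists q, [/\ hpath e U q, e a (head a q), last a q = x & d < size q]) ->
  exists b q, apath a b q /\ d < size q.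
Proof.
move=> aC UH [x xU] Hray.
case: tc => _ _ cTv.
have [c [cC nca]] := other_in_C a.
have xa : x \in setT :\ a.
  rewrite !inE andbT; apply/eqP => E; move: (H_notC (UH _ xU)); by rewrite E aC.
have ca : c \in setT :\ a by rewrite !inE nca.
have [pi [Hp Hl Hu Hall]] := conn_in_path (cTv a) xa ca.
have disj : forall z, z \in U -> ~~ ((z \in C) && (z != a)).
  by move=> z /UH /H_notC /negbTE ->.
have Hl' : (last x pi \in C) && (last x pi != a) by rewrite Hl cC nca.
have [u [W [g [uU /andP[gC nga] HpW HW Hsub]]]] :=
  @bridge _ e (mem U) [pred z | (z \in C) && (z != a)] disj x pi xU Hp Hl'.
have uW : uniq (u :: rcons W g) by exact: subseq_uniq Hsub Hu.
have Wa : forall w, w \in W -> w != a.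
  move=> w wW; have : w \in x :: pi by apply: (mem_subseq Hsub); rewrite inE mem_rcons inE wW !orbT.
  by move: Hall => /allP H' /H'; rewrite !inE andbT.
have WC : all (notC C) W.
  apply/allP => w wW; move/allP: HW => /(_ w wW) /andP[_].
  by rewrite /notC /= (Wa w wW) andbT.
have uH : u \in H by exact: UH.
move: (HpW); rewrite rcons_path => /andP[HpW' elg].
have WH := path_in_comp vC uH HpW' WC.
have WU : forall w, w \in W -> w \notin U.
  by move=> w wW; move/allP: HW => /(_ w wW) /andP[].
have [q [[qs qu qU] eaq lq sq]] := Hray u uU.
exists g, (q ++ W); split=> //.
have qn : q != [::] by case: (q) sq.
split=> //; first by rewrite eq_sym.
- by case: (q) qn.
- split; first split.
  + case: q qs qu qU eaq lq sq qn => [|q0 q] //= qs qu qU eaq lq sq _.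
    by rewrite cat_path qs /= lq HpW'.
  + rewrite cat_uniq qu /=; move: uW; rewrite /= rcons_uniq => /andP[_ /andP[_ ->]].
    rewrite andbT; apply/hasP => -[w wW wq].
    by move: (WU w wW); rewrite (qU w wq).
  + move=> w; rewrite mem_cat => /orP[/qU /UH //|/WH //].
  + by case: (q) qn eaq.
  + by rewrite last_cat lq.
- by rewrite size_cat; apply: leq_trans sq (leq_addr _ _).
Qed.

End D0.

Section Stick.
Variables (T : finType) (e : rel T).
Hypotheses (esym : symmetric e) (eirr : irreflexive e).
Hypothesis tc : two_connected e.
Variables (C : seq T) (v : T).
Hypotheses (vC : v \notin C) (Cu : uniq C) (C3 : 3 <= size C).

Local Notation H := (comp e C v).
Local Notation apath := (apath e C v).

Definition stick_inv a d S (U : {pred T}) :=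
  [/\ S != [::], hpath e H S, e a (head a S), {subset U <= H} &
   [/\ last a S \in U, (forall x, x \in S -> x \in U -> x = last a S),
       (exists x, x \in U /\ x != last a S) &
       (forall x, x \in U -> x != last a S -> exists q,
          [/\ hpath e U q, head x q = last a S, last x q = x & d < size q])]].

Lemma path_cat3 x s1 y s2 z s3 : path e x s1 -> last x s1 = y -> path e y s2 ->
  last y s2 = z -> path e z s3 -> path e x (s1 ++ s2 ++ s3).
Proof. by move=> H1 E1 H2 E2 H3; rewrite cat_path H1 E1 cat_path H2 E2 H3. Qed.

Lemma uniq_cat2 (s1 s2 : seq T) : uniq s1 -> uniq s2 ->
  (forall w, w \in s1 -> w \in s2 -> False) -> uniq (s1 ++ s2).
Proof.
move=> u1 u2 d; rewrite cat_uniq u1 u2 andbT /=; apply/hasP => -[w w2 w1].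
exact: d w w1 w2.
Qed.

Lemma infix_sorted s1 s2 s3 : sorted e (s1 ++ s2 ++ s3) -> sorted e s2.
Proof. by move=> /sorted_catr /sorted_catl. Qed.

Lemma infix_uniq (s1 s2 s3 : seq T) : uniq (s1 ++ s2 ++ s3) -> uniq s2.
Proof. by rewrite !cat_uniq => /and3P[_ _ /andP[]]. Qed.

Lemma memU3 (A B D : {pred T}) x :
  (x \in [predU [predU A & B] & D]) = [|| x \in A, x \in B | x \in D].
Proof. by rewrite !inE orbA. Qed.

Lemma split_mem (x : T) s : x \in s -> exists s1 s2, s = s1 ++ x :: s2.
Proof. by case/splitPr => s1 s2; exists s1, s2. Qed.

Lemma stickL a d : a \in C -> forall n S U, size S <= n -> stick_inv a d S U ->
  exists b q, apath a b q /\ d < size q.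
Proof.
move=> aC; elim=> [|n IH] S U Hn [Sn [Ss Su SH] eaS UH [rU SU [x0 [x0U x0r]] LP]].
  by move: Hn; rewrite leqn0 size_eq0 => /eqP E; rewrite E in Sn.
case: S Sn Ss Su SH eaS Hn rU SU x0r LP IH => [//|s0 S'] _ Ss Su SH eaS Hn rU SU x0r LP IH.
set r := last a (s0 :: S') in rU SU x0r LP.
have rE : r = last s0 S' by [].
have rS : r \in s0 :: S' by rewrite rE mem_last.
have rH : r \in H := SH _ rS.
have rC : r \notin C := H_notC vC rH.
case: tc => _ _ cTv.
have c0C : head v C \in C by case: C C3 => [|c C'] //= _; rewrite mem_head.
have x0S : x0 \in setT :\ r by rewrite !inE x0r.
have c0S : head v C \in setT :\ r.
  by rewrite !inE andbT; apply/eqP => E; move: rC; rewrite -E c0C.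
have [pi [Hp Hl Hu Hall]] := conn_in_path (cTv r) x0S c0S.
pose X := [pred z | (z \in U) && (z != r)].
pose Y := [pred z | (z \in C) || ((z \in s0 :: S') && (z != r))].
have disj : forall z, X z -> ~~ Y z.
  move=> z /andP[zU zr]; rewrite /Y /= negb_or (H_notC vC (UH _ zU)) /=.
  by apply/negP => /andP[zS]; rewrite (SU _ zS zU) eqxx.
have x0X : X x0 by rewrite /X /= x0U x0r.
have lY : Y (last x0 pi) by rewrite Hl /Y /= c0C.
have [u [W [g [/andP[uU ur] gY HpW HW Hsub]]]] := bridge disj x0X Hp lY.
have uW : uniq (u :: rcons W g) by exact: subseq_uniq Hsub Hu.
have inpi : forall w, w \in u :: rcons W g -> w != r.
  move=> w /(mem_subseq Hsub) wpi.
  by move: Hall => /allP /(_ w wpi); rewrite !inE andbT.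
have Wr : forall w, w \in W -> w != r.
  by move=> w wW; apply: inpi; rewrite inE mem_rcons inE wW !orbT.
have gr : g != r by apply: inpi; rewrite inE mem_rcons mem_head orbT.
have WU : forall w, w \in W -> w \notin U.
  move=> w wW; move/allP: HW => /(_ w wW) /andP[/negP nX _].
  by apply/negP => wU; apply: nX; rewrite /X /= wU Wr.
have WC : forall w, w \in W -> w \notin C.
  by move=> w wW; move/allP: HW => /(_ w wW) /andP[_]; rewrite /Y /= negb_or => /andP[].
have WS : forall w, w \in W -> w \notin s0 :: S'.
  move=> w wW; move/allP: HW => /(_ w wW) /andP[_]; rewrite /Y /= negb_or => /andP[_].
  by rewrite (Wr w wW) andbT.
have uH : u \in H := UH _ uU.
move: (HpW); rewrite rcons_path => /andP[HpW' elg].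
have WH : {subset W <= H}.
  by apply: (path_in_comp vC uH HpW'); apply/allP => w /WC.
have [qu [[qus quu quU] qh ql qsz]] := LP u uU ur.
case: qu qus quu quU qh ql qsz => [//|r' qu'] /= qus quu quU qh ql qsz.
subst r'.
have Wu : uniq W by move: uW; rewrite /= rcons_uniq => /andP[_ /andP[_]].
have qu'U : {subset qu' <= U} by move=> w wq; apply: quU; rewrite inE wq orbT.
have rqu' : r \notin qu' by move: quu => /andP[].
have Squ : forall w, w \in s0 :: S' -> w \in qu' -> False.
  move=> w wS wq; have := SU w wS (qu'U w wq); move=> E; subst w.
  by move: rqu'; rewrite wq.
have SW : forall w, w \in s0 :: S' -> w \in W -> False.
  by move=> w wS wW; move: (WS w wW); rewrite wS.
have quW : forall w, w \in qu' -> w \in W -> False.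
  by move=> w wq wW; move: (WU w wW); rewrite (qu'U w wq).
pose M := (s0 :: S') ++ qu' ++ W.
have Ms : sorted e M.
  by rewrite /M /= (path_cat3 (y := r) (z := u) Ss).
have quu' : uniq qu' by move: quu => /andP[].
have Mu : uniq M.
  apply: uniq_cat2 => //; first exact: uniq_cat2 quu' Wu quW.
  by move=> w wS; rewrite mem_cat => /orP[]; [exact: Squ | exact: SW].
have MS : forall w, w \in M -> [|| w \in s0 :: S', w \in U | w \in W].
  move=> w; rewrite /M !mem_cat => /orP[->//|/orP[/qu'U->|->]]; by rewrite ?orbT.
have sizeM : d < size ((s0 :: S') ++ qu').
  by rewrite size_cat /=; move: qsz => /= H0; clear -H0; lia.
have lM : last a M = last u W.
  by rewrite /M /= last_cat -rE last_cat ql.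
have HM : forall w, w \in M -> w \in H.
  by move=> w /MS /or3P[/SH|/UH|/WH].
move: gY; rewrite /Y /= => /orP[gC | /andP[gS _]].
  case: (eqVneq g a) => [ga | nga].
    subst g.
    pose U' := [predU [predU (mem (s0 :: S')) & U] & mem W].
    have U'H : {subset U' <= H}.
      by move=> w; rewrite /U' memU3 => /or3P[/SH|/UH|/WH].
    apply: (finalL tc vC Cu C3 aC U'H); first by exists u; rewrite /U' memU3 uU orbT.
    move=> x; rewrite /U' memU3; case: (boolP (x \in s0 :: S')) => [xS _|nxS /= /orP[xU|xW]].
    + have [S1 [S2 ES]] := split_mem xS.
      have EM : M = S1 ++ (x :: S2 ++ qu' ++ W) by rewrite /M ES -catA.
      have lS2 : last x S2 = r by rewrite rE -(last_cons s0) ES last_cat.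
      exists (rev (x :: S2 ++ qu' ++ W)); split.
      * apply: (hpath_rev esym); split.
        - by move: Ms; rewrite EM => /sorted_catr.
        - by move: Mu; rewrite EM cat_uniq => /and3P[].
        - move=> w wF; have : w \in M by rewrite EM mem_cat wF orbT.
          by move/MS => /or3P[H1|H1|H1]; rewrite /U' memU3 H1 ?orbT.
      * by rewrite rev_last_cons /= last_cat lS2 last_cat ql (esym a).
      * by rewrite rev_cons last_rcons.
      * by rewrite size_rev /= !size_cat; move: qsz => /= H0; clear -H0; lia.
    + have xr : x != r by apply/negP => /eqP E; move: nxS; rewrite E rS.
      have [[|r' qx'] [[qxs qxu qxU] qxh qxl qxsz]] := LP x xU xr => //.
      move: qxh => /= qxh; subst r'.
      exists ((s0 :: S') ++ qx'); split.
      * split.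
        - by rewrite /= cat_path; apply/andP; split; [exact: Ss | rewrite -rE; exact: qxs].
        - apply: uniq_cat2 => //; first by move: qxu => /andP[].
          move=> w wS wq; have wq' : w \in r :: qx' by rewrite inE wq orbT.
          have E := SU w wS (qxU w wq').
          by subst w; move: qxu => /andP[]; rewrite wq.
        - move=> w; rewrite /U' memU3 mem_cat => /orP[->//|wq].
          have wq' : w \in r :: qx' by rewrite inE wq orbT.
          by rewrite (qxU w wq') orbT.
      * by [].
      * by rewrite last_cat /= -rE; move: qxl.
      * by rewrite size_cat /=; move: qxsz => /= H0; clear -H0; lia.
    + have [W1 [W2 EW]] := split_mem xW.
      have EM : M = ((s0 :: S') ++ qu' ++ rcons W1 x) ++ W2.
        by rewrite /M EW -cat_rcons !catA.
      exists ((s0 :: S') ++ qu' ++ rcons W1 x); split.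
      * split.
        - by move: Ms; rewrite EM => /sorted_catl.
        - by move: Mu; rewrite EM cat_uniq => /and3P[].
        - move=> w wF; have : w \in M by rewrite EM mem_cat wF.
          by move/MS => /or3P[H1|H1|H1]; rewrite /U' memU3 H1 ?orbT.
      * by [].
      * by rewrite !last_cat last_rcons.
      * by rewrite !size_cat /=; move: qsz => /= H0; clear -H0; lia.
  exists g, M; split; last by apply: leq_trans sizeM _; rewrite /M catA [size (_ ++ W)]size_cat; exact: leq_addr.
  split=> //; first by rewrite eq_sym.
  split; [by split=> // w /HM | exact: eaS | by rewrite lM].
have [S1 [S2 ES]] := split_mem gS.
have lS2 : last g S2 = r by rewrite rE -(last_cons s0) ES last_cat.
have S2n : S2 != [::] by case: (S2) lS2 => //= E; move: gr; rewrite E eqxx.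
have rS2 : r \in S2 by case: (S2) S2n lS2 => //= y S2' _ <-; exact: mem_last.
have EM : M = S1 ++ g :: S2 ++ qu' ++ W by rewrite /M ES -catA.
have gM : g \notin S2 ++ qu' ++ W.
  by move: Mu; rewrite EM cat_uniq /= => /and3P[_ _ /andP[]].
pose U2 := [predU [predU (mem (g :: S2)) & U] & mem W].
apply: (IH (rcons S1 g) U2).
  by move: Hn; rewrite ES size_cat size_rcons /=; case: (S2) S2n => //= ? ? _ H0; clear -H0; lia.
have SS : forall w, w \in g :: S2 -> w \in s0 :: S'.
  by move=> w wS; rewrite ES mem_cat wS orbT.
split.
- by case: (S1).
- split.
  + by move: Ss; rewrite ES sorted_cat_cons => /andP[].
  + by move: Su; rewrite ES -cat_rcons cat_uniq => /andP[].
  + by move=> w wS; apply: SH; rewrite ES -cat_rcons mem_cat wS.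
- by move: eaS; rewrite ES; case: (S1).
- by move=> w; rewrite /U2 memU3 => /or3P[/SS /SH|/UH|/WH].
split.
- by rewrite last_rcons /U2 memU3 mem_head.
- move=> x; rewrite last_rcons mem_rcons inE => /orP[/eqP//|xS1].
  have nx : x \notin g :: S2.
    by move: Su; rewrite ES cat_uniq => /and3P[_ /hasP nh _]; apply/negP => xg; apply: nh; exists x.
  rewrite /U2 memU3 (negbTE nx) /=; move: nx; rewrite inE => /norP[_ nx2].
  case/orP=> [xU|xW].
    have xS : x \in s0 :: S' by rewrite ES mem_cat xS1.
    have := SU x xS xU => E; subst x.
    by move: nx2; rewrite rS2.
  by move: (WS x xW); rewrite ES mem_cat xS1.
- by exists r; rewrite last_rcons /U2 memU3 inE rS2 orbT eq_sym gr.
move=> x; rewrite last_rcons /U2 memU3 => xU2 xg.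
case: (boolP (x \in S2)) => [xS2 | nxS2].
  have [S2a [S2b ES2]] := split_mem xS2.
  pose F := x :: S2b ++ qu' ++ W.
  have EMF : M = (S1 ++ g :: S2a) ++ F by rewrite EM ES2 /F -!catA.
  have lS2b : last x S2b = r by rewrite -lS2 ES2 last_cat.
  have Fs : sorted e F by move: Ms; rewrite EMF => /sorted_catr.
  have Fu : uniq F by move: Mu; rewrite EMF cat_uniq => /and3P[].
  have gF : g \notin F.
    by move: gM; rewrite ES2 /F -catA mem_cat negb_or => /andP[_].
  exists (g :: rev F); split.
  + split.
    * have revF : rev F = last x (S2b ++ qu' ++ W) :: rev (belast x (S2b ++ qu' ++ W)).
        by rewrite /F rev_last_cons.
      have sF : sorted e (rev F) by rewrite sorted_rev_sym.
      move: sF; rewrite revF /= => ->; rewrite andbT.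
      by rewrite last_cat lS2b last_cat ql (esym g).
    * by rewrite /= mem_rev gF rev_uniq.
    * have gU2 : g \in U2 by rewrite /U2 memU3 mem_head.
      have FU2 : {subset F <= U2}.
        move=> w; rewrite /F -cat_cons !mem_cat => /or3P[wS|wq|wW]; rewrite /U2 memU3.
        - by rewrite inE ES2 mem_cat wS !orbT.
        - by rewrite (qu'U w wq) orbT.
        - by rewrite wW !orbT.
      by move=> w; rewrite inE mem_rev => /orP[/eqP->//|/FU2//].
  + by [].
  + by rewrite /= rev_cons last_rcons.
  + by rewrite /= size_rev /F /= !size_cat; move: qsz => /= H0; clear -H0; lia.
case/or3P: xU2 => [xgS2|xU|xW].
- by move: xgS2; rewrite inE (negbTE xg) (negbTE nxS2).
- have xr : x != r by apply/negP => /eqP E; move: nxS2; rewrite E rS2.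
  have [[|r' qx'] [[qxs qxu qxU] qxh qxl qxsz]] := LP x xU xr => //.
  move: qxh => /= qxh; subst r'.
  have gS2 : uniq (g :: S2) by move: Su; rewrite ES cat_uniq => /and3P[].
  exists (g :: S2 ++ qx'); split.
  + split.
    * have : sorted e (g :: S2) by move: Ss; rewrite ES => /sorted_catr.
      by rewrite /= cat_path => ->; rewrite lS2.
    * rewrite -cat_cons; apply: uniq_cat2 => //; first by move: qxu => /andP[].
      move=> w wS wq; have wq' : w \in r :: qx' by rewrite inE wq orbT.
      have E := SU w (SS w wS) (qxU w wq').
      by subst w; move: qxu => /andP[]; rewrite wq.
    * move=> w; rewrite /U2 memU3 -cat_cons mem_cat => /orP[->//|wq].
      have wq' : w \in r :: qx' by rewrite inE wq orbT.
      by rewrite (qxU w wq') orbT.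
  + by [].
  + by rewrite /= last_cat lS2.
  + by rewrite /= size_cat; move: qxsz => /= H0; clear -H0; lia.
- have [W1 [W2 EW]] := split_mem xW.
  have EMF : M = S1 ++ (g :: S2 ++ qu' ++ rcons W1 x) ++ W2.
    by rewrite EM EW -[W1 ++ x :: W2]cat_rcons /= !catA.
  exists (g :: S2 ++ qu' ++ rcons W1 x); split.
  + split.
    * by move: Ms; rewrite EMF => /infix_sorted.
    * by move: Mu; rewrite EMF => /infix_uniq.
    * move=> w; rewrite -cat_cons !mem_cat => /or3P[wS|wq|wW]; rewrite /U2 memU3.
      - by rewrite wS.
      - by rewrite (qu'U w wq) orbT.
      - have wW' : w \in W by rewrite EW -cat_rcons mem_cat wW.
        by rewrite wW' !orbT.
  + by [].
  + by rewrite /= !last_cat last_rcons.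
  + by rewrite /= !size_cat; move: qsz => /= H0; clear -H0; lia.
Qed.

End Stick.

Section D0main.
Variables (T : finType) (e : rel T).
Hypotheses (esym : symmetric e) (eirr : irreflexive e).
Hypothesis tc : two_connected e.
Variables (C : seq T) (v : T).
Hypotheses (vC : v \notin C) (Cu : uniq C) (C3 : 3 <= size C).

Local Notation H := (comp e C v).
Local Notation apath := (apath e C v).

Lemma pred_last (x : T) s : sorted e (x :: s) -> s != [::] ->
  exists z, z \in x :: s /\ e z (last x s).
Proof.
elim: s x => [//|y s IH] x /= /andP[exy Hs] _.
case: s IH Hs => [|y' s] IH Hs; first by exists x; rewrite mem_head.
have [z [zs ez]] := IH y Hs is_true_true.
by exists z; split=> //; rewrite inE zs orbT.
Qed.

Lemma D0 : exists a b q z, [/\ apath a b q, z \in H & #|[set x in H | e z x]| < size q].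
Proof.
have [u [a0 [uH a0C eua]]] := comp_attach tc vC C3.
pose Rp (ap : T * seq T) := [/\ ap.1 \in C, ap.2 != [::], hpath e H ap.2 &
   e ap.1 (head ap.1 ap.2)].
have ex : exists ap, Rp ap.
  exists (a0, [:: u]); split=> //=; last by rewrite esym.
  by split=> // w; rewrite inE => /eqP->.
have bnd : forall ap, Rp ap -> size ap.2 <= #|T|.
  by move=> ap [_ _ [_ u' _] _]; exact: uniq_size_card.
have [[a p] [[aC pn [ps pu pH] eap] pmax]] :=
  @ex_max _ Rp (fun ap => size ap.2) #|T| ex bnd.
rewrite /= in aC pn ps pu pH eap pmax.
case: p pn ps pu pH eap pmax => [//|p0 p'] _ ps pu pH eap pmax.
set y := last p0 p'.
have yp : y \in p0 :: p' by exact: mem_last.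
have yH : y \in H := pH _ yp.
have NH : forall w, w \in H -> e y w -> w \in p0 :: p'.
  move=> w wH eyw; apply/negPn/negP => wp.
  have R' : Rp (a, rcons (p0 :: p') w).
    split; [exact: aC | by [] | split | by []].
    + by rewrite /= rcons_path; apply/andP; split.
    + by rewrite rcons_uniq wp pu.
    + by move=> z; rewrite mem_rcons inE => /orP[/eqP->//|/pH].
  by have := pmax _ R'; rewrite /= size_rcons ltnn.
have cnt : #|[set x in H | e y x]| <= count (e y) (p0 :: p').
  rewrite -size_filter; apply: leq_trans (card_size _).
  apply: subset_leq_card; apply/subsetP => x; rewrite in_set => /andP[xH eyx].
  by rewrite mem_filter eyx (NH x xH eyx).
case: (classic (exists al, [/\ al \in C, al != a & e y al])) => [[al [alC nal eyal]]|no].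
  exists a, al, (p0 :: p'), y; split=> //.
    by split=> //; first by rewrite eq_sym.
  apply: leq_ltn_trans cnt _; by apply: (count_lt (x := y)) => //; rewrite eirr.
have Hno : forall al, al \in C -> e y al -> al = a.
  move=> al alC eyal; apply/eqP; apply/negPn/negP => nal; apply: no.
  by exists al.
set d := count (e y) (p0 :: p').
suff [b [q [Hq dq]]] : exists b q, apath a b q /\ d < size q.
  by exists a, b, q, y; split=> //; apply: leq_ltn_trans cnt dq.
case: (boolP (e y a)) => [eya | neya].
  apply: (finalL tc vC Cu C3 aC pH); first by exists p0; rewrite mem_head.
  move=> x xp; have [L [R E]] := split_mem xp.
  have yE : y = last x R by rewrite /y -(last_cons p0) E last_cat.
  have sE : sorted e (L ++ x :: R) by rewrite -E.
  have uE : uniq (L ++ x :: R) by rewrite -E.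
  have dE : d = count (e (last x R)) (L ++ x :: R) by rewrite /d E yE.
  case: (boolP (has (e (last x R)) L)) => [hL|nhL].
    have [q [qs qu qsub qh [ql qc]]] := rot_path esym eirr sE uE hL.
    have qn : q != [::] by case: (q) qc.
    exists q; split.
    - by split=> // w /qsub; rewrite -E.
    - have hq : head a q = head x q by case: (q) qn.
      rewrite hq qh; case: (L) E hL => //= l0 L' E _.
      by move: E eap => [->].
    - by case: (q) qn ql.
    - by rewrite dE.
  have [q [qs qu qsub qh [ql qc]]] := rot_path0 esym eirr sE uE nhL.
  have qn : q != [::] by case: (q) qc.
  exists q; split.
  - by split=> // w /qsub; rewrite -E.
  - have hq : head a q = head x q by case: (q) qn.
    by rewrite hq qh -yE esym.
  - by case: (q) qn ql.
  - by rewrite dE.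
have p'n : p' != [::].
  by move: neya; rewrite /y; case: (p') => //=; rewrite esym eap.
have hp : has (e y) (p0 :: p').
  have [z [zp ezy]] := pred_last ps p'n.
  by apply/hasP; exists z => //; rewrite esym.
have [P0 [r [Rest [E eyr nhP0]]]] := split_first hp.
have yE : y = last r Rest by rewrite /y -(last_cons p0) E last_cat.
have sE : sorted e (P0 ++ r :: Rest) by rewrite -E.
have uE : uniq (P0 ++ r :: Rest) by rewrite -E.
have dE : d = count (e y) (r :: Rest).
  rewrite /d E count_cat.
  by have -> : count (e y) P0 = 0 by apply/eqP; rewrite eqn0Ngt -has_count.
apply: (stickL esym tc vC Cu C3 aC (n := size (rcons P0 r)) (U := mem (r :: Rest)) (leqnn _)).
have P0rest : forall w, w \in P0 -> w \in r :: Rest -> False.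
  move=> w w1 w2; move: uE; rewrite cat_uniq => /and3P[_ /hasP nh _].
  by apply: nh; exists w.
split.
- by case: (P0).
- split.
  + by move: sE; rewrite sorted_cat_cons => /andP[].
  + by move: uE; rewrite -cat_rcons cat_uniq => /andP[].
  + by move=> w wS; apply: pH; rewrite E -cat_rcons mem_cat wS.
- by move: eap; rewrite E; case: (P0).
- by move=> w wR; apply: pH; rewrite E mem_cat wR orbT.
split.
- by rewrite last_rcons mem_head.
- move=> x; rewrite last_rcons mem_rcons inE => /orP[/eqP//|x1 x2].
  by exfalso; apply: (P0rest x x1 x2).
- exists y; split; first by rewrite yE mem_last.
  by rewrite last_rcons; apply/negP => /eqP E'; move: eyr; rewrite E' eirr.
move=> x; rewrite last_rcons inE => /orP[/eqP->|xR]; first by rewrite eqxx.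
move=> _.
have [R1 [R2 ER]] := split_mem xR.
have sR : sorted e ((r :: R1) ++ x :: R2) by move: sE; rewrite ER => /sorted_catr.
have uR : uniq ((r :: R1) ++ x :: R2).
  by move: uE; rewrite ER cat_uniq => /and3P[_ _].
have yR : y = last x R2 by rewrite yE ER /= last_cat.
have hR : has (e (last x R2)) (r :: R1) by rewrite -yR /= eyr.
have [q [qs qu qsub qh [ql qc]]] := rot_path esym eirr sR uR hR.
have qn : q != [::] by case: (q) qc.
exists q; split.
- by split=> // w /qsub; rewrite ER.
- by rewrite qh.
- by [].
- by rewrite dE ER yR.
Qed.

End D0main.

Section Count.
Variables (T : finType) (e : rel T).
Hypotheses (esym : symmetric e) (eirr : irreflexive e).
Hypothesis tc : two_connected e.

Definition isrot (C s : seq T) := exists k, rot k C = s.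

Lemma isrot_rot C s j : isrot C s -> j <= size s -> isrot C (rot j s).
Proof.
move=> [k <-] js; rewrite size_rot in js.
case: (leqP k (size C)) => kC.
  by rewrite rot_add_mod //; eexists.
by rewrite (rot_oversize (ltnW kC)); exists j.
Qed.

Lemma isrot_cat C s1 s2 : isrot C (s1 ++ s2) -> isrot C (s2 ++ s1).
Proof.
move=> Hr; rewrite -rot_size_cat; apply: isrot_rot Hr _.
by rewrite size_cat leq_addr.
Qed.

Lemma isrot_mem C s x : isrot C s -> (x \in s) = (x \in C).
Proof. by move=> [k <-]; rewrite mem_rot. Qed.

Lemma isrot_uniq C s : isrot C s -> uniq s = uniq C.
Proof. by move=> [k <-]; rewrite rot_uniq. Qed.

Lemma isrot_cycle C s : isrot C s -> cycle e s = cycle e C.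
Proof. by move=> [k <-]; rewrite rot_cycle. Qed.

Lemma isrot_size C s : isrot C s -> size s = size C.
Proof. by move=> [k <-]; rewrite size_rot. Qed.

Lemma isrot_count C s (P : pred T) : isrot C s -> count P s = count P C.
Proof. by move=> [k <-]; apply/permP; rewrite perm_rot. Qed.

Variables (C : seq T) (v : T).
Hypothesis (Ccb : cummerbund e C) (vC : v \notin C).

Local Notation H := (comp e C v).

Lemma splice al X be Y P : isrot C (al :: X ++ be :: Y) -> P != [::] ->
  hpath e H P -> e al (head al P) -> e (last al P) be ->
  is_cycle e (al :: P ++ be :: Y).
Proof.
move=> Hr Pn [Ps Pu PH] eh el.
have [[C3 Cu Cc] _] := Ccb.
have su : uniq (al :: X ++ be :: Y) by rewrite (isrot_uniq Hr).
have sc : cycle e (al :: X ++ be :: Y) by rewrite (isrot_cycle Hr).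
have PC : forall w, w \in P -> w \notin C by move=> w /PH /(comp_notC vC).
split.
- by case: (P) Pn => [//|p0 P'] _ /=; rewrite size_cat /= !addnS.
- have u1 : uniq (al :: be :: Y).
    by apply: subseq_uniq su; rewrite /= eqxx suffix_subseq.
  have inC : forall w, w \in al :: be :: Y -> w \in C.
    move=> w; rewrite -(isrot_mem w Hr) !inE mem_cat inE.
    by case/or3P => ->; rewrite ?orbT.
  rewrite /= mem_cat negb_or.
  have alP : al \notin P by apply/negP => /PC; rewrite inC ?mem_head.
  move: u1 => /= /andP[alY u1]; rewrite alP alY /=.
  apply: uniq_cat2 => // w wP wY.
  by move: (PC w wP); rewrite inC // inE wY orbT.
- move: sc; rewrite /cycle /= rcons_cat rcons_cons cat_path => /andP[_].
  rewrite /= => /andP[ebe pY].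
  rewrite rcons_cat rcons_cons cat_path /=.
  case: P Pn Ps eh el {PH Pu PC} => [//|p0 P] _ /= Ps eh el.
  by rewrite eh Ps el pY.
Qed.

Lemma longest_splice al X be Y P : isrot C (al :: X ++ be :: Y) -> P != [::] ->
  hpath e H P -> e al (head al P) -> e (last al P) be -> size P <= size X.
Proof.
move=> Hr Pn HP eh el.
have := Ccb.2 _ (splice Hr Pn HP eh el).
move=> H0; have := isrot_size Hr; move: H0; rewrite /= !size_cat /=.
clear; lia.
Qed.

End Count.

Section Seg.
Variables (T : finType) (e : rel T).
Hypotheses (esym : symmetric e) (eirr : irreflexive e).
Hypothesis tc : two_connected e.
Variables (C : seq T) (v : T).
Hypothesis (Ccb : cummerbund e C) (vC : v \notin C).

Local Notation H := (comp e C v).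

Lemma triL P x : P != [::] -> hpath e H P -> x \in H ->
  exists P1 P2, [/\ P1 != [::], P2 != [::], hpath e H P1, hpath e H P2 &
    [/\ head x P1 = head x P, last x P1 = x, head x P2 = x, last x P2 = last x P &
        size P < size P1 + size P2]].
Proof.
move=> Pn [Ps Pu PH] xH.
case: (boolP (x \in P)) => [xP|nxP].
  have [A1 [A2 EP]] := split_mem xP.
  have Hs : sorted e (A1 ++ x :: A2) by rewrite -EP.
  have Hu : uniq (A1 ++ x :: A2) by rewrite -EP.
  exists (rcons A1 x), (x :: A2); split.
  - by case: (A1).
  - by [].
  - split.
    + by move: Hs; rewrite sorted_cat_cons => /andP[].
    + by move: Hu; rewrite -cat_rcons cat_uniq => /andP[].
    + by move=> w wA; apply: PH; rewrite EP -cat_rcons mem_cat wA.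
  - split.
    + by apply: sorted_catr Hs.
    + by move: Hu; rewrite cat_uniq => /and3P[].
    + by move=> w wA; apply: PH; rewrite EP mem_cat wA orbT.
  split.
  - by rewrite EP; case: (A1).
  - by rewrite last_rcons.
  - by [].
  - by rewrite EP last_cat.
  - by rewrite EP size_rcons size_cat /=; clear; lia.
have hP : head x P \in H by apply: PH; case: (P) Pn => //= p0 ? _; rewrite mem_head.
have [R [Rp Rl Ru RH]] := comp_path esym vC xH hP.
have disj : forall z, z \in pred1 x -> z \notin P.
  by move=> z; rewrite inE => /eqP->.
have hPP : last x R \in P by rewrite Rl; case: (P) Pn => //= p0 ? _; rewrite mem_head.
have [x' [W [y [/eqP -> yP HpW HW Hsub]]]] :=
  bridge disj (eqxx x) Rp hPP.
have xWu : uniq (x :: rcons W y) by exact: subseq_uniq Hsub Ru.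
have xWH : forall w, w \in x :: rcons W y -> w \in H by move=> w /(mem_subseq Hsub) /RH.
have WP : forall w, w \in x :: W -> w \notin P.
  move=> w; rewrite inE => /orP[/eqP->//|wW].
  by move/allP: HW => /(_ w wW) /andP[].
have [xnW Wu] : x \notin W /\ uniq W.
  move: xWu => /= /andP[]; rewrite mem_rcons inE negb_or rcons_uniq.
  by move=> /andP[_ ->] /andP[_ ->].
have [A1 [A2 EP]] := split_mem yP.
have Hs : sorted e (A1 ++ y :: A2) by rewrite -EP.
have Hu : uniq (A1 ++ y :: A2) by rewrite -EP.
move: (HpW); rewrite rcons_path => /andP[HpW' ely].
exists (rcons A1 y ++ rev (x :: W)), (x :: W ++ y :: A2); split.
- by case: (A1).
- by [].
- split.
  + rewrite rev_last_cons; apply: sorted_join.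
    * by move: Hs; rewrite sorted_cat_cons => /andP[].
    * by rewrite -rev_last_cons sorted_rev_sym.
    * by rewrite esym.
  + rewrite uniq_cat_rev; apply: uniq_cat2.
    * by move: Hu; rewrite -cat_rcons cat_uniq => /andP[].
    * by rewrite /= xnW Wu.
    * move=> w wA wW; have : w \in P by rewrite EP -cat_rcons mem_cat wA.
      by rewrite (negbTE (WP w wW)).
  + move=> w; rewrite mem_cat mem_rcons mem_rev => /orP[wA|wW].
      by apply: PH; rewrite EP -cat_rcons mem_cat mem_rcons wA.
    by apply: xWH; rewrite inE mem_rcons inE; move: wW; rewrite inE => /orP[->|->]; rewrite ?orbT.
- split.
  + rewrite -cat_cons; apply: sorted_cat_path.
      by move: HpW'.
    by rewrite /= ely; apply: sorted_catr Hs.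
  + rewrite -cat_cons; apply: uniq_cat2.
    * by rewrite /= xnW Wu.
    * by move: Hu; rewrite cat_uniq => /and3P[].
    * move=> w wW wA; have : w \in P by rewrite EP mem_cat wA orbT.
      by rewrite (negbTE (WP w wW)).
  + move=> w; rewrite -cat_cons mem_cat => /orP[wW|wA].
      apply: xWH; move: wW; rewrite !inE mem_rcons inE.
      by case/orP=> ->; rewrite ?orbT.
    by apply: PH; rewrite EP mem_cat wA orbT.
split.
- by rewrite EP; case: (A1).
- by rewrite last_cat rev_cons last_rcons.
- by [].
- by rewrite EP /= last_cat /= last_cat.
- rewrite EP !size_cat ?size_rcons ?size_rev /= ?size_cat /=; clear; lia.
Qed.

End Seg.

Lemma head_def (T : eqType) (s : seq T) x y : s != [::] -> head x s = head y s.
Proof. by case: s. Qed.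

Lemma last_def (T : eqType) (s : seq T) x y : s != [::] -> last x s = last y s.
Proof. by case: s. Qed.

Lemma head_rev (T : eqType) (s : seq T) x : head x (rev s) = last x s.
Proof. by case/lastP: s => // s y; rewrite rev_rcons last_rcons. Qed.

Lemma last_rev (T : eqType) (s : seq T) x : last x (rev s) = head x s.
Proof. by case: s => // y s; rewrite rev_cons last_rcons. Qed.

Section Final.
Variables (T : finType) (e : rel T).
Hypotheses (esym : symmetric e) (eirr : irreflexive e).
Hypothesis tc : two_connected e.
Variables (C : seq T) (v : T).
Hypothesis (Ccb : cummerbund e C) (vC : v \notin C).

Local Notation H := (comp e C v).

Definition Att : {set T} := [set a | (a \in C) && [exists u, (u \in H) && e a u]].
Definition inAtt : pred T := fun z => z \in Att.

Definition nomove := forall al X be Y P, isrot C (al :: X ++ be :: Y) ->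
  ~~ has inAtt X -> P != [::] -> hpath e H P -> e al (head al P) ->
  e (last al P) be -> size P != size X.

Hypothesis NM : nomove.

Lemma segL n : forall X al be Y P, size X <= n -> isrot C (al :: X ++ be :: Y) ->
  P != [::] -> hpath e H P -> e al (head al P) -> e (last al P) be ->
  size P + 3 * count inAtt X + 1 <= size X.
Proof.
elim: n => [|n IH] X al be Y P Xn Hr Pn HP eh el.
  have := longest_splice Ccb vC Hr Pn HP eh el.
  by move: Xn; rewrite leqn0 => /eqP ->; case: (P) Pn.
case: (boolP (has inAtt X)) => [hX|nhX].
  have [X1 [g [X2 [EX gA nh1]]]] := split_first hX.
  move: (gA); rewrite /inAtt inE => /andP[gC /existsP[ug /andP[ugH egu]]].
  have [P1 [P2 [P1n P2n HP1 HP2 [h1 l1 h2 l2 sz]]]] := triL esym vC Pn HP ugH.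
  have EX' : X1 ++ g :: X2 ++ be :: Y = X ++ be :: Y by rewrite EX -catA.
  have Hr1 : isrot C (al :: X1 ++ g :: (X2 ++ be :: Y)) by rewrite EX'.
  have eh1 : e al (head al P1) by rewrite (head_def al ug P1n) h1 -(head_def al ug Pn).
  have el1 : e (last al P1) g by rewrite (last_def al ug P1n) l1 esym.
  have s1 := longest_splice Ccb vC Hr1 P1n HP1 eh1 el1.
  have n1 := NM Hr1 nh1 P1n HP1 eh1 el1.
  have Hr2 : isrot C (g :: X2 ++ be :: (Y ++ al :: X1)).
    have : isrot C ((al :: X1) ++ (g :: X2 ++ be :: Y)) by rewrite /= EX'.
    by move/isrot_cat; rewrite cat_cons -catA.
  have eh2 : e g (head g P2) by rewrite (head_def g ug P2n) h2.
  have el2 : e (last g P2) be by rewrite (last_def g ug P2n) l2 -(last_def al ug Pn).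
  have Xs : size X2 <= n by move: Xn; rewrite EX size_cat /= => H0; clear -H0; lia.
  have s2 := IH X2 g be _ P2 Xs Hr2 P2n HP2 eh2 el2.
  have cX : count inAtt X = (count inAtt X2).+1.
    rewrite EX count_cat /= gA.
    by have -> : count inAtt X1 = 0 by apply/eqP; rewrite eqn0Ngt -has_count.
  rewrite cX EX size_cat /=.
  move: s1 n1 s2 sz; clear; rewrite neq_ltn.
  move: (size P) (size P1) (size P2) (size X1) (size X2) (count inAtt X2) => a b c d f g.
  move=> s1 /orP[n1|n1] s2 sz; lia.
have := longest_splice Ccb vC Hr Pn HP eh el.
have := NM Hr nhX Pn HP eh el.
have -> : count inAtt X = 0 by apply/eqP; rewrite eqn0Ngt -has_count.
by rewrite neq_ltn => /orP[H1|H1] H2; [rewrite muln0 addn0 addn1 | move: H1 H2; clear; lia].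
Qed.

Hypothesis deg : forall w, #|T| <= 3 * degree e w.

Lemma count_Att : count inAtt C = #|Att|.
Proof.
have [[_ Cu _] _] := Ccb.
rewrite -size_filter; have Fu := filter_uniq inAtt Cu.
move/card_uniqP: Fu => <-; apply: eq_card => x; rewrite mem_filter /inAtt.
by case: (boolP (x \in Att)) => //; rewrite inE => /andP[->].
Qed.

Lemma final_contra : False.
Proof.
have [[C3 Cu _] _] := Ccb.
have [a [b [q [z [[aC bC nab qn [[qs qu qH] eaq eqb]] zH zN]]]]] := D0 esym eirr tc vC Cu C3.
have [i s' Ei] := rot_to aC.
have bs' : b \in s'.
  by move: bC; rewrite -(mem_rot i) Ei inE eq_sym (negbTE nab).
have [Y [Z Es']] := split_mem bs'.
have Hr1 : isrot C (a :: Y ++ b :: Z) by exists i; rewrite Ei Es'.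
have Hr2 : isrot C (b :: Z ++ a :: Y).
  by have := isrot_cat (s1 := a :: Y) Hr1.
have s1 := segL (leqnn _) Hr1 qn (And3 qs qu qH) eaq eqb.
have rqn : rev q != [::] by rewrite -size_eq0 size_rev size_eq0.
have HPr : hpath e H (rev q) by apply: hpath_rev.
have ehr : e b (head b (rev q)) by rewrite head_rev (last_def b a qn) esym.
have elr : e (last b (rev q)) a by rewrite last_rev (head_def b a qn) esym.
have s2 := segL (leqnn _) Hr2 rqn HPr ehr elr.
rewrite size_rev in s2.
have aA : inAtt a.
  rewrite /inAtt inE aC /=; apply/existsP; exists (head a q); rewrite eaq andbT.
  by apply: qH; case: (q) qn => //= ? ? _; rewrite mem_head.
have bA : inAtt b.
  rewrite /inAtt inE bC /=; apply/existsP; exists (last a q); rewrite esym eqb andbT.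
  by apply: qH; case: (q) qn => //= ? ? _; rewrite mem_last.
have cnt : (count inAtt Y + count inAtt Z).+2 = #|Att|.
  rewrite -count_Att -(isrot_count _ Hr1) /= count_cat /= aA bA; clear; lia.
have szC : (size Y + size Z).+2 = size C.
  by rewrite -(isrot_size Hr1) /= size_cat /=; clear; lia.
have dg : degree e z <= #|[set x in H | e z x]| + #|Att|.
  rewrite /degree; apply: leq_trans (_ : #|[set x in H | e z x] :|: Att| <= _).
    apply: subset_leq_card; apply/subsetP => u; rewrite in_set => ezu; apply/setUP.
    case: (boolP (u \in C)) => uC.
      right; rewrite /Att in_set uC /=; apply/existsP; exists z; rewrite zH /=.
      by rewrite esym.
    by left; rewrite in_set (comp_closed vC zH ezu uC) ezu.
  by rewrite cardsU leq_subr.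
have tot : size C + size q <= #|T|.
  rewrite -size_cat; apply: uniq_size_card; rewrite cat_uniq Cu qu andbT /=.
  by apply/hasP => -[w /qH wH wC]; move: (comp_notC vC wH); rewrite wC.
have dz := deg z.
move: s1 s2 cnt szC dg tot dz zN; clear; lia.
Qed.

End Final.

Section Main.
Variables (T : finType) (e : rel T).
Hypotheses (esym : symmetric e) (eirr : irreflexive e).
Hypothesis tc : two_connected e.
Hypothesis deg : forall w, #|T| <= 3 * degree e w.
Variable v : T.

Lemma comp_shrink C al X be Y P : cummerbund e C -> v \notin C ->
  isrot C (al :: X ++ be :: Y) -> ~~ has (inAtt e C v) X -> P != [::] ->
  hpath e (comp e C v) P -> v \notin P ->
  v \notin al :: P ++ be :: Y /\ #|comp e (al :: P ++ be :: Y) v| < #|comp e C v|.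
Proof.
move=> Ccb vC Hr nh Pn [Ps Pu PH] vP.
set C' := al :: P ++ be :: Y.
have inC : forall w, w \in al :: be :: Y -> w \in C.
  move=> w; rewrite -(isrot_mem w Hr) !inE mem_cat inE.
  by case/or3P => ->; rewrite ?orbT.
have vC' : v \notin C'.
  apply/negP; rewrite /C' inE mem_cat => /or3P[/eqP E|vP'|vbY].
  - by move: vC; rewrite E inC ?mem_head.
  - by move: vP; rewrite vP'.
  - by move: vC; rewrite inC // inE vbY orbT.
split=> //.
have key : forall p w, w \in comp e C v -> w \notin P ->
    path (restr e (notC C')) w p -> (last w p \in comp e C v) && (last w p \notin P).
  elim=> [|b p IH] w wH wP /=; first by rewrite wH wP.
  move=> /andP[/and3P[ewb _ bC'] Hp]; apply: IH Hp.
    apply: (comp_closed vC wH ewb); apply/negP => bC.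
    have bs : b \in al :: X ++ be :: Y by rewrite (isrot_mem b Hr).
    have bX : b \in X.
      move: bs bC'; rewrite /notC /C' !inE !mem_cat !inE.
      case/orP=> [->//|/orP[->//|/orP[->|->]]]; rewrite ?orbT //.
    move/hasP: nh; apply; exists b => //.
    rewrite /inAtt inE bC /=; apply/existsP; exists w; rewrite wH /= esym //.
  by apply/negP => bP; move: bC'; rewrite /notC /C' inE mem_cat bP orbT.
have sub : forall x, x \in comp e C' v -> (x \in comp e C v) && (x \notin P).
  move=> x; rewrite inE => /connectP[p Hp ->].
  exact: key (comp_v e C v) vP Hp.
apply: proper_card; apply/properP; split.
  by apply/subsetP => x /sub /andP[].
have hP : head v P \in P by case: (P) Pn => //= ? ? _; rewrite mem_head.
exists (head v P); first exact: PH.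
by apply/negP => /sub /andP[_]; rewrite hP.
Qed.

Lemma main_ind n : forall C, cummerbund e C -> v \notin C -> #|comp e C v| <= n ->
  exists c, cummerbund e c /\ v \in c.
Proof.
elim: n => [|n IH] C Ccb vC Hn.
  by move: Hn; rewrite leqn0 => /eqP /cards0_eq E; move: (comp_v e C v); rewrite E inE.
case: (classic (exists al X be Y P, [/\ isrot C (al :: X ++ be :: Y),
   ~~ has (inAtt e C v) X, P != [::], hpath e (comp e C v) P &
   [/\ e al (head al P), e (last al P) be & size P = size X]])) => [mv|nomv].
  have [al [X [be [Y [P [Hr nh Pn HP [eh el sPX]]]]]]] := mv.
  have cyc := splice Ccb vC Hr Pn HP eh el.
  have cb : cummerbund e (al :: P ++ be :: Y).
    split=> // d dc; apply: leq_trans (Ccb.2 d dc) _.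
    by rewrite -(isrot_size Hr) /= !size_cat /= sPX.
  case: (boolP (v \in P)) => vP.
    by exists (al :: P ++ be :: Y); split=> //; rewrite inE mem_cat vP orbT.
  have [vC' lt] := comp_shrink Ccb vC Hr nh Pn HP vP.
  apply: (IH _ cb vC'); rewrite -ltnS; exact: leq_trans lt Hn.
exfalso; apply: (final_contra esym eirr tc Ccb vC _ deg).
move=> al X be Y P Hr nh Pn HP eh el; apply/negP => /eqP sPX; apply: nomv.
by exists al, X, be, Y, P; split.
Qed.

End Main.

Unset Implicit Arguments.

Theorem theorem3 (T : finType) (e : rel T) :
  simple_graph e ->
  two_connected e ->
  (forall v : T, #|T| <= 3 * degree e v) ->
  cummerbund_covered e.
Proof.
move=> [esym eirr] tc deg v.
have [c0 c0c] := exists_cycle eirr tc.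
have bnd : forall c, is_cycle e c -> size c <= #|T|.
  by move=> c [_ cu _]; exact: uniq_size_card.
have [C [Ccyc Cmax]] := ex_max (ex_intro _ c0 c0c) bnd.
have Ccb : cummerbund e C by split.
case: (boolP (v \in C)) => vC; first by exists C.
exact: (main_ind esym eirr tc deg (n := #|comp e C v|) Ccb vC (leqnn _)).
Qed.
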